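(* Let $E\in M_n(\mathbb{FT})$ be idempotent. Then: (i) $E$ has the unique eigenvalue $0$, which is its maximum cycle mean, and the corresponding eigenspace is $C(E)$; (ii) $E_{i,i}=0$ if and only if $i$ is a node of the critical graph of $E$; (iii) the columns of $E$ with diagonal entry $0$ form a generating set for $C(E)$; (iv) every extremal point of $C(E)$ is, up to scaling, a column of $E$ with $0$ in the diagonal position; (v) the rows of $E$ with diagonal entry $0$ form a generating set for $R(E)$; (vi) every extremal point of $R(E)$ is, up to scaling, a row of $E$ with $0$ in the diagonal position; (vii) the rank of $E$ equals the number of strongly connected components of the critical graph of $E$; (viii) each strongly connected component of the critical graph of $E$ is a complete subgraph of $\Gamma_E$; (ix) if $i,j$ lie in the same strongly connected component of the critical graph, then the $i$th column of $E$ is a tropical multiple (real shift) of the $j$th column; (x) if $i,j$ lie in the same strongly connected component of the critical graph, then the $i$th row of $E$ is a tropical multiple of the $j$th row.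
   Context: $\mathbb{FT}$ is $\mathbb{R}$ with $a\oplus b=\max(a,b)$, $a\otimes b=a+b$; $M_n(\mathbb{FT})$ is the semigroup of real $n\times n$ matrices under $(A\otimes B)_{i,j}=\max_k(A_{i,k}+B_{k,j})$. A scalar $\lambda\in\mathbb{R}$ is an eigenvalue of $A$ if $A\otimes x=\lambda\otimes x$ for some $x\in\mathbb{R}^n$, where $(\lambda\otimes x)_i=\lambda+x_i$; the eigenspace is the set of all such $x$. $C(A)$, $R(A)\subseteq\mathbb{R}^n$ are the sets of finite componentwise maxima of real shifts of columns, resp. rows, of $A$ (submodules under componentwise max and shifts). A point $x$ of such a set $X$ is extremal if $X\setminus\{\lambda\otimes x:\lambda\in\mathbb{R}\}$ is closed under componentwise max and shifts. The rank of an idempotent $E$ is the minimal cardinality of a generating set of $C(E)$. $\Gamma_A$ is the complete weighted digraph on $\{1,\dots,n\}$ with edge $j\to i$ of weight $A_{i,j}$; the maximum cycle mean is the maximum arithmetic mean of edge weights over closed paths; the critical graph consists of all nodes and edges lying on closed paths whose mean equals the maximum cycle mean. *)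

(* Defs.v *)
From HB Require Import structures.
From mathcomp Require Import all_boot all_order all_algebra.
From mathcomp Require Import boolp reals.
From Stdlib Require Import Relations.

Set Implicit Arguments.
Unset Strict Implicit.
Unset Printing Implicit Defensive.

Import Order.TTheory GRing.Theory Num.Theory.
Local Open Scope ring_scope.

Section Tropical.
Variable R : realType.
Variable n : nat.
(* Dimension is n.+1 (i.e. n >= 1): indices are 'I_n.+1. *)
Local Notation N := n.+1.
Local Notation mat := 'M[R]_N.
Local Notation vec := 'cV[R]_N.

Definition tmul (A B : mat) : mat :=
  \matrix_(i, j) \big[Num.max/(A i ord0 + B ord0 j)]_(k < N) (A i k + B k j).

Definition tmulv (A : mat) (x : vec) : vec :=
  \col_i \big[Num.max/(A i ord0 + x ord0 0)]_(k < N) (A i k + x k 0).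

Definition tshift (l : R) (x : vec) : vec := \col_i (l + x i 0).

Definition vmax (x y : vec) : vec := \col_i Num.max (x i 0) (y i 0).

Definition tidempotent (A : mat) : Prop := tmul A A = A.

Definition is_teigenvalue (A : mat) (l : R) : Prop :=
  exists x : vec, tmulv A x = tshift l x.

Definition teigenspace (A : mat) (l : R) (x : vec) : Prop :=
  tmulv A x = tshift l x.

Definition tspan (S : vec -> Prop) (x : vec) : Prop :=
  exists (l0 : R) (v0 : vec) (l : seq (R * vec)),
    S v0 /\ (forall p, p \in l -> S p.2) /\
    x = foldr (fun p acc => vmax (tshift p.1 p.2) acc) (tshift l0 v0) l.

Definition colspace (A : mat) : vec -> Prop :=
  tspan (fun v => exists j, v = col j A).

Definition rowspace (A : mat) : vec -> Prop :=
  tspan (fun v => exists i, v = (row i A)^T).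

Definition generates (S X : vec -> Prop) : Prop :=
  forall x, X x <-> tspan S x.

Definition tclosed (X : vec -> Prop) : Prop :=
  (forall x y, X x -> X y -> X (vmax x y)) /\
  (forall l x, X x -> X (tshift l x)).

Definition extremal (X : vec -> Prop) (x : vec) : Prop :=
  X x /\ tclosed (fun y => X y /\ ~ (exists l, y = tshift l x)).

(* rank of an idempotent: minimal cardinality of a generating set of C(E)
   (generating sets of minimal cardinality are finite, since C(E) is
   finitely generated, so it suffices to range over finite sequences) *)
Definition has_rank (A : mat) (r : nat) : Prop :=
  (exists S : seq vec, size S = r /\ generates (fun v => v \in S) (colspace A))
  /\ (forall S : seq vec, generates (fun v => v \in S) (colspace A) ->
        (r <= size S)%N).

(* Closed paths in Gamma_A: a nonempty node sequence x :: s, with edges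
   x -> s_0 -> ... -> s_last -> x; the edge j -> i has weight A i j. *)
Definition cycle_edges (x : 'I_N) (s : seq 'I_N) : seq ('I_N * 'I_N) :=
  zip (x :: s) (rcons s x).

Definition cycle_weight (A : mat) (x : 'I_N) (s : seq 'I_N) : R :=
  \sum_(e <- cycle_edges x s) A e.2 e.1.

Definition cycle_mean (A : mat) (x : 'I_N) (s : seq 'I_N) : R :=
  cycle_weight A x s / (size s).+1%:R.

Definition is_max_cycle_mean (A : mat) (mu : R) : Prop :=
  (forall x s, cycle_mean A x s <= mu) /\ (exists x s, cycle_mean A x s = mu).

Definition critical_cycle (A : mat) (x : 'I_N) (s : seq 'I_N) : Prop :=
  forall y t, cycle_mean A y t <= cycle_mean A x s.

Definition crit_node (A : mat) (i : 'I_N) : Prop :=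
  exists x s, critical_cycle A x s /\ i \in x :: s.

Definition crit_edge (A : mat) (i j : 'I_N) : Prop :=
  exists x s, critical_cycle A x s /\ (i, j) \in cycle_edges x s.

Definition same_scc (A : mat) (i j : 'I_N) : Prop :=
  crit_node A i /\ crit_node A j /\
  clos_refl_trans _ (crit_edge A) i j /\ clos_refl_trans _ (crit_edge A) j i.

Definition n_scc (A : mat) : nat :=
  #|[set [set j | `[< same_scc A i j >]] | i in [set i | `[< crit_node A i >]]]|.

End Tropical.

(* Main.v *)
Require Import Defs.
From HB Require Import structures.
From mathcomp Require Import all_boot all_order all_algebra.
From mathcomp Require Import boolp reals.
From Stdlib Require Import Relations Classical.
From mathcomp Require Import lra.
Import Order.TTheory GRing.Theory Num.Theory.
Local Open Scope ring_scope.

Set Implicit Arguments.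
Section T.
Variable R : realType.
Variable n : nat.
Local Notation N := n.+1.

Lemma bigmax_ub (x0 : R) (F : 'I_N -> R) k : F k <= \big[Num.max/x0]_(k < N) F k.
Proof.
rewrite unlock.
have : k \in index_enum 'I_N by rewrite mem_index_enum.
elim: (index_enum 'I_N) => //= a r IH.
rewrite in_cons => /orP [/eqP ->|/IH H]; rewrite le_max ?lexx //.
by rewrite H orbT.
Qed.

Lemma bigmax_att (F : 'I_N -> R) : exists k, \big[Num.max/F ord0]_(k < N) F k = F k.
Proof.
apply: (big_rec (fun v => exists k, v = F k)); first by exists ord0.
move=> i x _ [k ->].
case: (leP (F i) (F k)) => _; [by exists k| by exists i].
Qed.

Lemma bigmax_eq (x0 v : R) (F : 'I_N -> R) :
  x0 <= v -> (forall k, F k <= v) -> (exists k, v = F k) ->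
  \big[Num.max/x0]_(k < N) F k = v.
Proof.
move=> h0 hF [k hk]; apply/le_anti/andP; split.
  apply: (big_rec (fun u => u <= v)) => // i x _ hx.
  by rewrite ge_max hF hx.
by rewrite hk bigmax_ub.
Qed.

Lemma fold_eval (L : seq (R * 'cV[R]_N)) l0 v0 i :
  (foldr (fun p acc => vmax (tshift p.1 p.2) acc) (tshift l0 v0) L) i 0 =
  foldr (fun (p : R * 'cV[R]_N) acc => Num.max (p.1 + p.2 i 0) acc) (l0 + v0 i 0) L.
Proof. by elim: L => [|p L IH] /=; rewrite !mxE ?IH. Qed.

Lemma foldr_le (T : eqType) (G : T -> R) (x0 : R) (L : seq T) y :
  x0 <= y -> (forall p, p \in L -> G p <= y) ->
  foldr (fun p acc => Num.max (G p) acc) x0 L <= y.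
Proof.
elim: L => [|p L IH] //= h0 hL.
by rewrite ge_max hL ?mem_head // IH // => q hq; apply: hL; rewrite in_cons hq orbT.
Qed.

Lemma foldr_ge (T : eqType) (G : T -> R) (x0 : R) (L : seq T) p :
  p \in L -> G p <= foldr (fun p acc => Num.max (G p) acc) x0 L.
Proof.
elim: L => [|q L IH] //=; rewrite in_cons => /orP [/eqP ->|h].
  by rewrite le_max lexx.
by rewrite le_max IH ?orbT.
Qed.

Lemma foldr_ge0 (T : eqType) (G : T -> R) (x0 : R) (L : seq T) :
  x0 <= foldr (fun p acc => Num.max (G p) acc) x0 L.
Proof. by elim: L => [|q L IH] //=; rewrite le_max IH orbT. Qed.

Lemma foldr_eq (T : eqType) (G : T -> R) (x0 : R) (L : seq T) (y : R) :
  x0 <= y -> (forall p, p \in L -> G p <= y) -> (exists2 p, p \in L & y = G p) ->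
  foldr (fun p acc => Num.max (G p) acc) x0 L = y.
Proof.
move=> h0 hL [p hp e]; apply/le_anti/andP; split; first exact: foldr_le.
by rewrite e; exact: foldr_ge.
Qed.

Lemma tspan_mono (S S' : 'cV[R]_N -> Prop) x :
  (forall v, S v -> S' v) -> tspan S x -> tspan S' x.
Proof.
move=> h [l0 [v0 [L [h0 [hL ->]]]]].
exists l0, v0, L; split; first exact: h.
by split=> // p hp; apply/h/hL.
Qed.

Section Idem.
Variable A : 'M[R]_N.
Hypothesis HA : tidempotent A.

Lemma tri i k j : A i k + A k j <= A i j.
Proof.
have := congr1 (fun M : 'M[R]_N => M i j) HA; rewrite /tmul mxE => <-.
exact: (bigmax_ub _ (fun k => A i k + A k j)).
Qed.

Lemma att i j : exists k, A i j = A i k + A k j.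
Proof.
have := congr1 (fun M : 'M[R]_N => M i j) HA; rewrite /tmul mxE => <-.
have [k hk] := bigmax_att (fun k => A i k + A k j).
by exists k; rewrite /= in hk; rewrite hk.
Qed.

Lemma diag_le0 i : A i i <= 0.
Proof. have := tri i i i; lra. Qed.

Lemma attb i j : exists k, A i j == A i k + A k j.
Proof. by have [k hk] := att i j; exists k; apply/eqP. Qed.

Lemma key i j : exists k, A k k = 0 /\ A i j = A i k + A k j.
Proof.
pose f k := xchoose (attb k j).
have hf k : A k j = A k (f k) + A (f k) j by apply/eqP; exact: (xchooseP (attb k j)).
pose kt t := iter t.+1 f i.
have hS t : A i j = A i (kt t) + A (kt t) j.
  elim: t => [|t IH]; first exact: hf.
  rewrite /kt iterS -/(kt t).
  have := hf (kt t); have := tri i (kt t) (f (kt t)); have := tri i (f (kt t)) j. lra.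
have hD t : A i (kt t.+1) = A i (kt t) + A (kt t) (kt t.+1).
  rewrite /kt iterS -/(kt t).
  have := hf (kt t); have := tri i (kt t) (f (kt t)); have := tri i (f (kt t)) j.
  have := hS t. lra.
have hP p m : A (kt p) (kt (p + m.+1)%N) >= A i (kt (p + m.+1)%N) - A i (kt p).
  elim: m => [|m IH]; first by rewrite addn1 hD; lra.
  rewrite addnS hD.
  have := tri (kt p) (kt (p + m.+1)%N) (kt (p+m.+1).+1). lra.
have [t1 [t2 [hne heq]]] : exists t1 t2 : 'I_N.+1, t1 <> t2 /\ kt t1 = kt t2.
  apply: Classical_Prop.NNPP => hn.
  have inj : injective (fun t : 'I_N.+1 => kt t).
    move=> a b hab; apply: Classical_Prop.NNPP => hab'; apply: hn; by exists a, b.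
  by have := leq_card _ inj; rewrite !card_ord ltnn.
wlog hlt : t1 t2 hne heq / (t1 < t2)%N.
  move=> W; case: (ltngtP t1 t2) => h.
  - exact: (W t1 t2).
  - by apply: (W t2 t1) => // e; apply: hne; rewrite e.
  - by exfalso; apply: hne; apply: val_inj.
exists (kt t1); split; last exact: hS.
apply/le_anti; rewrite diag_le0 /=.
have := hP t1 (t2 - t1.+1)%N.
have -> : (t1 + (t2 - t1.+1).+1)%N = t2 by rewrite -subSn // subnKC // ltnW.
rewrite -heq; lra.
Qed.

Lemma crit_exists : exists k, A k k = 0.
Proof. by have [k [hk _]] := key ord0 ord0; exists k. Qed.

Definition fixed (x : 'cV[R]_N) :=
  (forall i k, A i k + x k 0 <= x i 0) /\ (forall i, exists k, x i 0 = A i k + x k 0).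

Lemma eig_iff l x : tmulv A x = tshift l x <->
  (forall i k, A i k + x k 0 <= l + x i 0) /\ (forall i, exists k, l + x i 0 = A i k + x k 0).
Proof.
split.
  move=> H.
  have e i := congr1 (fun v : 'cV[R]_N => v i 0) H.
  split=> [i k|i]; have := e i; rewrite !mxE => <-.
    exact: (bigmax_ub _ (fun k => A i k + x k 0)).
  have [k hk] := bigmax_att (fun k => A i k + x k 0).
  by exists k; rewrite /= in hk; rewrite hk.
move=> [h1 h2]; apply/matrixP => i j; rewrite ord1 !mxE.
apply: bigmax_eq; [exact: h1| exact: h1|].
by have [k hk] := h2 i; exists k.
Qed.

Lemma fixed_iff x : tmulv A x = tshift 0 x <-> fixed x.
Proof.
rewrite eig_iff /fixed; split=> [[h1 h2]|[h1 h2]]; split.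
- by move=> i k; have := h1 i k; rewrite add0r.
- by move=> i; have [k hk] := h2 i; exists k; rewrite -hk add0r.
- by move=> i k; rewrite add0r.
- by move=> i; have [k hk] := h2 i; exists k; rewrite add0r.
Qed.

Lemma fixed_col j : fixed (col j A).
Proof.
split=> [i k|i]; rewrite !mxE; first exact: tri.
by have [k hk] := att i j; exists k; rewrite !mxE.
Qed.

Lemma fixed_shift l x : fixed x -> fixed (tshift l x).
Proof.
move=> [h1 h2]; split=> [i k|i]; rewrite !mxE.
  by have := h1 i k; lra.
by have [k hk] := h2 i; exists k; rewrite !mxE hk; lra.
Qed.

Lemma fixed_max x y : fixed x -> fixed y -> fixed (vmax x y).
Proof.
move=> [h1 h2] [g1 g2]; split=> [i k|i]; rewrite !mxE.
  have := h1 i k; have := g1 i k.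
  by case: (leP (x k 0) (y k 0)); case: (leP (x i 0) (y i 0)); lra.
case: (leP (x i 0) (y i 0)) => hxy.
  have [k hk] := g2 i; exists k; rewrite !mxE.
  apply/le_anti/andP; split.
    by rewrite hk lerD2l le_max lexx orbT.
  have := h1 i k; have := g1 i k.
  by case: (leP (x k 0) (y k 0)); lra.
have [k hk] := h2 i; exists k; rewrite !mxE.
apply/le_anti/andP; split.
  by rewrite hk lerD2l le_max lexx.
have := h1 i k; have := g1 i k.
by case: (leP (x k 0) (y k 0)); lra.
Qed.

Lemma tspan_fixed (S : 'cV[R]_N -> Prop) x :
  (forall v, S v -> fixed v) -> tspan S x -> fixed x.
Proof.
move=> hS [l0 [v0 [L [h0 [hL ->]]]]].
elim: L hL => [|p L IH] hL /=; first exact/fixed_shift/hS.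
apply: fixed_max; first by apply/fixed_shift/hS/hL; rewrite mem_head.
by apply: IH => q hq; apply: hL; rewrite in_cons hq orbT.
Qed.

Lemma fixed_span_crit x : fixed x -> tspan (fun v => exists j, A j j = 0 /\ v = col j A) x.
Proof.
move=> [h1 h2].
have [m0 hm0] := crit_exists.
pose L := [seq (x m 0, col m A) | m <- [seq m <- enum 'I_N | A m m == 0]].
exists (x m0 0), (col m0 A), L; split; first by exists m0.
split.
  move=> p /mapP [m]; rewrite mem_filter => /andP [/eqP hm _] ->.
  by exists m.
apply/matrixP => i j; rewrite ord1 fold_eval.
apply/esym/foldr_eq.
- by rewrite mxE addrC h1.
- move=> p /mapP [m _ ->] /=; by rewrite mxE addrC h1.
have [k hk] := h2 i.
have [m [hm hikm]] := key i k.
have e : x i 0 = A i m + x m 0.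
  apply/le_anti/andP; split; last exact: h1.
  by rewrite hk hikm -addrA lerD2l h1.
exists (x m 0, col m A); last by rewrite /= mxE addrC.
apply/mapP; exists m => //; by rewrite mem_filter hm eqxx mem_enum.
Qed.

Lemma colspace_fixed x : colspace A x <-> fixed x.
Proof.
split; first by apply: tspan_fixed => v [j ->]; exact: fixed_col.
move=> /fixed_span_crit; apply: tspan_mono => v [j [_ ->]]; by exists j.
Qed.

Definition pw a s b := \sum_(e <- zip (a :: s) (rcons s b)) A e.2 e.1.

Lemma pw_cons a c s b : pw a (c :: s) b = A c a + pw c s b.
Proof. by rewrite /pw /= big_cons. Qed.

Lemma pw_nil a b : pw a [::] b = A b a.
Proof. by rewrite /pw /= big_cons big_nil addr0. Qed.

Lemma pw_le s a b : pw a s b <= A b a.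
Proof.
elim: s a => [|c s IH] a; first by rewrite pw_nil.
rewrite pw_cons; have := IH c; have := tri b c a; lra.
Qed.

Definition D u v := if u == v then 0 else A v u.

Lemma D_ge u v : A v u <= D u v.
Proof. rewrite /D; case: eqP => [->|_] //; exact: diag_le0. Qed.

Lemma D_tri u v w : D u v + D v w <= D u w.
Proof.
rewrite /D; case: (eqVneq u v) => [->|huv]; first by rewrite add0r.
case: (eqVneq v w) => [<-|hvw]; first by rewrite (negbTE huv) addr0.
case: (eqVneq u w) => [<-|huw].
  by have := tri u v u; have := diag_le0 u; lra.
by rewrite addrC; exact: tri.
Qed.

Lemma pw_edge (s : seq 'I_N) (a0 b0 a b : 'I_N) : (a, b) \in zip (a0 :: s) (rcons s b0) ->
  pw a0 s b0 <= D a0 a + A b a + D b b0.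
Proof.
elim: s a0 => [|c s IH] a0 /=.
  rewrite mem_seq1 => /eqP [-> ->]; rewrite pw_nil /D !eqxx; lra.
rewrite in_cons => /orP [/eqP [-> ->]|h].
  rewrite pw_cons /D eqxx add0r lerD2l.
  apply: le_trans (pw_le s c b0) _; exact: D_ge.
rewrite pw_cons; have := IH c h; have := D_tri a0 c a; have := D_ge a0 c; lra.
Qed.

Lemma node_edge (s : seq 'I_N) (a0 b0 i : 'I_N) : i \in a0 :: s -> exists b, (i, b) \in zip (a0 :: s) (rcons s b0).
Proof.
elim: s a0 => [|c s IH] a0.
  by rewrite mem_seq1 => /eqP ->; exists b0; rewrite /= mem_seq1.
rewrite in_cons => /orP [/eqP ->|h].
  by exists c; rewrite /= mem_head.
have [b hb] := IH c h; exists b; by rewrite /= in_cons hb orbT.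
Qed.

Lemma mean_le0 x s : cycle_mean A x s <= 0.
Proof.
rewrite /cycle_mean ler_pdivrMr ?ltr0Sn // mul0r.
apply: le_trans (diag_le0 x); exact: pw_le.
Qed.

Lemma mean_nil m : cycle_mean A m [::] = A m m.
Proof. by rewrite /cycle_mean /cycle_weight /= big_cons big_nil addr0 divr1. Qed.

Lemma crit_w x s : critical_cycle A x s -> 0 <= pw x s x.
Proof.
move=> hc; have [m hm] := crit_exists.
have := hc m [::]; rewrite mean_nil hm /cycle_mean ler_pdivlMr ?ltr0Sn // mul0r.
done.
Qed.

Lemma crit_edge_iff a b : crit_edge A a b <-> A a b + A b a = 0.
Proof.
split.
  move=> [x [s [hc he]]].
  have := @pw_edge s x x a b he; have := @crit_w x s hc; have := D_tri b x a.
  rewrite /D; case: (eqVneq b a) => [->|hba].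
    by have := diag_le0 a; case: eqP; case: eqP; lra.
  have := tri a b a; have := diag_le0 a.
  by case: (eqVneq x a); case: (eqVneq b x); lra.
move=> h; exists a, [:: b]; split; last by rewrite /cycle_edges /= mem_head.
move=> y t; apply: le_trans (mean_le0 y t) _.
by rewrite /cycle_mean /cycle_weight /= !big_cons big_nil addr0 addrC h mul0r.
Qed.

Lemma crit_node_iff i : crit_node A i <-> A i i = 0.
Proof.
split.
  move=> [x [s [hc hi]]].
  have [b hb] := @node_edge s x x i hi.
  have /crit_edge_iff h : crit_edge A i b by exists x, s.
  by apply/le_anti; rewrite diag_le0 /=; have := tri i b i; lra.
move=> h; exists i, [::]; split; last by rewrite mem_head.
by move=> y t; rewrite mean_nil h mean_le0.
Qed.

Lemma sc_trans u v w : A u v + A v u = 0 -> A v w + A w v = 0 -> A u w + A w u = 0.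
Proof.
move=> h1 h2; apply/le_anti/andP; split.
  by have := tri u w u; have := diag_le0 u; lra.
by have := tri u v w; have := tri w v u; lra.
Qed.

Lemma sc_diag u v : A u v + A v u = 0 -> A u u = 0.
Proof. by move=> h; apply/le_anti; rewrite diag_le0 /=; have := tri u v u; lra. Qed.

Lemma same_scc_iff i j : same_scc A i j <-> A i j + A j i = 0.
Proof.
split.
  move=> [/crit_node_iff hi [_ [hij _]]].
  have : i = j \/ A i j + A j i = 0.
    elim: hij => {i j hi} [u v /crit_edge_iff h|u|u v w _ [<-|h1] _ [<-|h2]]; auto.
    by right; apply: sc_trans h1 h2.
  by case=> [<-|//]; rewrite hi addr0.
move=> h; split; first by apply/crit_node_iff; apply: sc_diag h.
split; first by apply/crit_node_iff; apply: (@sc_diag j i); rewrite addrC.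
split; apply: rt_step; apply/crit_edge_iff => //; by rewrite addrC.
Qed.

Lemma col_shift i j : A i j + A j i = 0 -> col i A = tshift (A j i) (col j A).
Proof.
move=> h; apply/matrixP => k z; rewrite !mxE.
by apply/le_anti/andP; split; [have := tri k i j | have := tri k j i]; lra.
Qed.

Lemma row_shift i j : A i j + A j i = 0 -> (row i A)^T = tshift (A i j) (row j A)^T.
Proof.
move=> h; apply/matrixP => k z; rewrite !mxE.
by apply/le_anti/andP; split; [have := tri j i k | have := tri i j k]; lra.
Qed.

Lemma shift_inv (l : R) (v : 'cV[R]_N) (l' : R) (x : 'cV[R]_N) : tshift l v = tshift l' x -> x = tshift (l - l') v.
Proof.
move=> e; apply/matrixP => i z; rewrite ord1; have := congr1 (fun u : 'cV[R]_N => u i 0) e.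
by rewrite !mxE => e'; lra.
Qed.

Lemma extremal_col x : extremal (colspace A) x ->
  exists j (l : R), A j j = 0 /\ x = tshift l (col j A).
Proof.
move=> [hx [hmax hsh]].
apply: NNPP => hn.
have hY : forall j l, A j j = 0 ->
   colspace A (tshift l (col j A)) /\ ~ (exists l', tshift l (col j A) = tshift l' x).
  move=> j l hj; split; first by apply/colspace_fixed/fixed_shift/fixed_col.
  move=> [l' e]; apply: hn; exists j, (l - l'); split=> //; exact: shift_inv e.
have [l0 [v0 [L [[j0 [hj0 ->]] [hL ex]]]]] := @fixed_span_crit x (proj1 (colspace_fixed x) hx).
have hF : forall L' : seq (R * 'cV[R]_N), (forall p, p \in L' -> exists j, A j j = 0 /\ p.2 = col j A) ->
    (fun y => colspace A y /\ ~ (exists l, y = tshift l x))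
    (foldr (fun p acc => vmax (tshift p.1 p.2) acc) (tshift l0 (col j0 A)) L').
  elim=> [|p L' IH] hL' /=; first exact: hY.
  apply: hmax; last by apply: IH => q hq; apply: hL'; rewrite in_cons hq orbT.
  have [j [hj ->]] := hL' p (mem_head _ _); exact: hY.
have := hF L hL; rewrite /= -ex.
move=> [_]; apply; exists 0; apply/matrixP => i z; by rewrite ord1 mxE add0r.
Qed.

Lemma tshift_comp (a b : R) (w : 'cV[R]_N) : tshift a (tshift b w) = tshift (a + b) w.
Proof. by apply/matrixP => i z; rewrite !mxE addrA. Qed.

Lemma tshift0 (w : 'cV[R]_N) : tshift 0 w = w.
Proof. by apply/matrixP => i z; rewrite ord1 !mxE add0r. Qed.

Lemma tspan_shift (S S' : 'cV[R]_N -> Prop) x :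
  (forall v, S' v -> exists w (l : R), S w /\ v = tshift l w) -> tspan S' x -> tspan S x.
Proof.
move=> h [l0 [v0 [L [h0 [hL ->]]]]].
have [w0 [m0 [hw0 ->]]] := h _ h0.
have gen : forall L : seq (R * 'cV[R]_N), (forall q, q \in L -> S' q.2) ->
   exists L' : seq (R * 'cV[R]_N), (forall q, q \in L' -> S q.2) /\
     foldr (fun p acc => vmax (tshift p.1 p.2) acc) (tshift l0 (tshift m0 w0)) L =
     foldr (fun p acc => vmax (tshift p.1 p.2) acc) (tshift (l0 + m0) w0) L'.
  elim=> [|q L' IH] hq; first by exists [::]; rewrite /= tshift_comp.
  have [L'' [hS e]] : exists L'' : seq (R * 'cV[R]_N), (forall q, q \in L'' -> S q.2) /\
     foldr (fun p acc => vmax (tshift p.1 p.2) acc) (tshift l0 (tshift m0 w0)) L' =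
     foldr (fun p acc => vmax (tshift p.1 p.2) acc) (tshift (l0 + m0) w0) L''.
    by apply: IH => r hr; apply: hq; rewrite in_cons hr orbT.
  have [w [m [hw ew]]] := h _ (hq q (mem_head _ _)).
  exists ((q.1 + m, w) :: L''); split.
    move=> r; rewrite in_cons => /orP [/eqP -> //|]; exact: hS.
  by rewrite /= e ew tshift_comp.
have [L' [hS e]] := gen L hL.
by exists (l0 + m0), w0, L'.
Qed.

Lemma foldr_att (T : eqType) (G : T -> R) (x0 : R) (L : seq T) :
  foldr (fun p acc => Num.max (G p) acc) x0 L = x0 \/
  exists2 p, p \in L & foldr (fun p acc => Num.max (G p) acc) x0 L = G p.
Proof.
elim: L => [|p L IH] /=; first by left.
case: (leP (G p) (foldr (fun p acc => Num.max (G p) acc) x0 L)) => _.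
  case: IH => [->|[q hq ->]]; first by left.
  by right; exists q => //; rewrite in_cons hq orbT.
by right; exists p => //; rewrite mem_head.
Qed.

Lemma col_in_span (S : 'cV[R]_N -> Prop) a : A a a = 0 ->
  (forall w, S w -> colspace A w) -> tspan S (col a A) ->
  exists w (l : R), S w /\ col a A = tshift l w.
Proof.
move=> ha hS [l0 [v0 [L [h0 [hL e]]]]].
have ei i := congr1 (fun v : 'cV[R]_N => v i 0) e.
have K : forall l w, S w -> (forall i, l + w i 0 <= A i a) -> l + w a 0 = 0 ->
    exists w (l : R), S w /\ col a A = tshift l w.
  move=> l w hw hle hla; exists w, l; split=> //.
  apply/matrixP => i z; rewrite ord1 !mxE.
  apply/le_anti/andP; split; last exact: hle.
  have [f1 _] := proj1 (colspace_fixed w) (hS _ hw).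
  by have := f1 i a; lra.
have := ei a; rewrite /= fold_eval mxE ha.
case: (@foldr_att _ (fun (p : R * 'cV[R]_N) => p.1 + p.2 a 0) (l0 + v0 a 0) L) => [->|[p hp ->]] e0.
  apply: (K l0 v0 h0) => [i|]; last by rewrite e0.
  by have := ei i; rewrite /= fold_eval mxE => ->; apply: foldr_ge0.
apply: (K p.1 p.2 (hL p hp)) => [i|]; last by rewrite e0.
have := ei i; rewrite /= fold_eval mxE => ->.
exact: (@foldr_ge _ (fun (p : R * 'cV[R]_N) => p.1 + p.2 i 0) _ _ _ hp).
Qed.

Lemma scc_set i : [set j | `[< same_scc A i j >]] = [set j | A i j + A j i == 0].
Proof.
apply/setP => j; rewrite !inE.
by apply/idP/idP => [/asboolP/same_scc_iff/eqP //|/eqP/same_scc_iff/asboolP //].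
Qed.

Lemma has_rank_A : has_rank A (n_scc A).
Proof.
rewrite /n_scc.
set C := [set _ | i in _].
have memC c : c \in C -> exists i, A i i = 0 /\ c = [set j | A i j + A j i == 0].
  move=> /imsetP [i]; rewrite inE => /asboolP/crit_node_iff hi ->.
  by exists i; split => //; exact: scc_set.
have inC i : A i i = 0 -> [set j | A i j + A j i == 0] \in C.
  by move=> hi; rewrite -scc_set; apply: imset_f; rewrite inE; apply/asboolP/crit_node_iff.
pose rep (c : {set 'I_N}) := odflt ord0 [pick j in c].
have rep_sc i : A i i = 0 ->
    A i (rep [set j | A i j + A j i == 0]) + A (rep [set j | A i j + A j i == 0]) i = 0.
  move=> hi; rewrite /rep; case: pickP => [j|h] /=; first by rewrite !inE => /eqP.
  by have := h i; rewrite !inE hi addr0 eqxx.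
split.
  exists [seq col (rep c) A | c <- enum C]; split; first by rewrite size_map -cardE.
  move=> x; split.
    move=> /colspace_fixed /fixed_span_crit; apply: tspan_shift => v [m [hm ->]].
    have hr := rep_sc m hm; set r := rep _ in hr.
    exists (col r A), (A r m); split; last exact: col_shift.
    by apply/mapP; exists [set j | A m j + A j m == 0] => //; rewrite mem_enum; exact: inC.
  move=> hx; apply/colspace_fixed; apply: tspan_fixed hx => v /mapP [c _ ->]; exact: fixed_col.
move=> S hS.
have Scol w : w \in S -> colspace A w.
  move=> hw; apply/hS; exists 0, w, [::]; split => //; by rewrite /= tshift0.
have hex c : c \in C -> has (fun w => `[< exists l, col (rep c) A = tshift l w >]) S.
  move=> /memC [i [hi ->]].
  have hr := rep_sc i hi; set r := rep _ in hr *.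
  have hrr : A r r = 0 by apply: (@sc_diag r i); rewrite addrC.
  have hsp : tspan (fun w => w \in S) (col r A).
    by apply/hS/colspace_fixed/fixed_col.
  have [w [l [hw e]]] := @col_in_span (fun w => w \in S) r hrr Scol hsp.
  by apply/hasP; exists w => //; apply/asboolP; exists l.
pose g c := nth 0 S (find (fun w => `[< exists l, col (rep c) A = tshift l w >]) S).
have gP c : c \in C -> g c \in S /\ exists l, col (rep c) A = tshift l (g c).
  move=> hc; have h := hex c hc; split; first by rewrite /g mem_nth // -has_find.
  by apply/asboolP; exact: (nth_find 0 h).
have ginj : {in C &, injective g}.
  move=> c c' hc hc' e.
  have [_ [l el]] := gP c hc; have [_ [l' el']] := gP c' hc'.
  rewrite e in el.
  have [i [hi ec]] := memC c hc; have [i' [hi' ec']] := memC c' hc'.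
  have sr := rep_sc i hi; have sr' := rep_sc i' hi'.
  rewrite -ec in sr; rewrite -ec' in sr'.
  set r := rep c in el sr; set r' := rep c' in el' sr'.
  have E1 k : A k r = l + g c' k 0.
    by have := congr1 (fun v : 'cV[R]_N => v k 0) el; rewrite !mxE.
  have E2 k : A k r' = l' + g c' k 0.
    by have := congr1 (fun v : 'cV[R]_N => v k 0) el'; rewrite !mxE.
  have hrr : A r r = 0 by apply: (@sc_diag r i); rewrite addrC.
  have hrr' : A r' r' = 0 by apply: (@sc_diag r' i'); rewrite addrC.
  have srr : A r r' + A r' r = 0.
    have := E1 r; have := E1 r'; have := E2 r; have := E2 r'; lra.
  have sii : A i i' + A i' i = 0.
    apply: (sc_trans _ _ _ sr); apply: (sc_trans _ _ _ srr); by rewrite addrC.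
  apply: (etrans ec); apply: esym; apply: (etrans ec'); apply/setP => j; rewrite !inE.
  apply/eqP/eqP => h.
    exact: (sc_trans _ _ _ sii h).
  by apply: (sc_trans _ i) => //; rewrite addrC.
have := @uniq_leq_size _ (map g (enum C)) S.
rewrite size_map -cardE; apply.
  rewrite map_inj_in_uniq ?enum_uniq // => c c'; rewrite !mem_enum; exact: ginj.
by move=> w /mapP [c hc ->]; rewrite mem_enum in hc; exact: (gP c hc).1.
Qed.

End Idem.

Lemma idem_of (A : 'M[R]_N) : (forall i k j, A i k + A k j <= A i j) ->
  (forall i j, exists k, A i j = A i k + A k j) -> tidempotent A.
Proof.
move=> h1 h2; apply/matrixP => i j; rewrite mxE.
apply: (@bigmax_eq _ _ (fun k => A i k + A k j)); [exact: (h1 i ord0 j) | move=> k; exact: h1 | have [k hk] := h2 i j; by exists k].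
Qed.

Lemma idem_tr (A : 'M[R]_N) : tidempotent A -> tidempotent A^T.
Proof.
move=> HA; apply: idem_of => [i k j|i j]; rewrite !mxE.
  by rewrite addrC; exact: tri.
by have [k hk] := att HA j i; exists k; rewrite !mxE hk addrC.
Qed.

Lemma rowspace_tr (A : 'M[R]_N) : rowspace A = colspace A^T.
Proof.
rewrite /rowspace /colspace; congr tspan; apply: funext => v; apply: propext.
by split => [[i ->]|[i ->]]; exists i; rewrite tr_row.
Qed.

End T.
Unset Implicit Arguments.


Theorem corollary5p2 (R : realType) (n : nat) (E : 'M[R]_n.+1) :
  tidempotent E ->
  (* (i) *)
  ((forall l : R, is_teigenvalue E l <-> l = 0) /\
   is_max_cycle_mean E 0 /\
   (forall x, teigenspace E 0 x <-> colspace E x)) /\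
  (* (ii) *)
  (forall i, E i i = 0 <-> crit_node E i) /\
  (* (iii) *)
  generates (fun v => exists j, E j j = 0 /\ v = col j E) (colspace E) /\
  (* (iv) *)
  (forall x, extremal (colspace E) x ->
     exists j (l : R), E j j = 0 /\ x = tshift l (col j E)) /\
  (* (v) *)
  generates (fun v => exists i, E i i = 0 /\ v = (row i E)^T) (rowspace E) /\
  (* (vi) *)
  (forall x, extremal (rowspace E) x ->
     exists i (l : R), E i i = 0 /\ x = tshift l (row i E)^T) /\
  (* (vii) *)
  has_rank E (n_scc E) /\
  (* (viii) *)
  (forall i j, same_scc E i j -> crit_edge E i j) /\
  (* (ix) *)
  (forall i j, same_scc E i j -> exists l : R, col i E = tshift l (col j E)) /\
  (* (x) *)
  (forall i j, same_scc E i j ->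
     exists l : R, (row i E)^T = tshift l (row j E)^T).
Proof.
move=> HE; have HT := idem_tr HE.
have gen : forall A : 'M[R]_n.+1, tidempotent A ->
    generates (fun v => exists j, A j j = 0 /\ v = col j A) (colspace A).
  move=> A HA x; split.
    by move=> /(colspace_fixed HA) /(fixed_span_crit HA).
  move=> h; apply/(colspace_fixed HA); apply: (tspan_fixed _ h) => v [j [_ ->]].
  exact: fixed_col.
split.
  split.
    move=> l; split.
      move=> [x /(eig_iff _ E l x) [h1 h2]].
      have [m hm] := crit_exists HE.
      have := h1 m m; rewrite hm.
      have [k hk] := h2 ord0; have [m' hm'] := h2 k.
      have := tri HE ord0 k m'; have := h1 ord0 m'. lra.
    move=> ->; exists (col ord0 E); apply/(fixed_iff _ E (col ord0 E)); exact: fixed_col.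
  split.
    split; first by move=> x s; exact: mean_le0.
    by have [m hm] := crit_exists HE; exists m, [::]; rewrite mean_nil.
  move=> x; rewrite /teigenspace.
  by split => [/(fixed_iff _ E x)/(colspace_fixed HE)|/(colspace_fixed HE)/(fixed_iff _ E x)].
split; first by move=> i; exact: iff_sym (crit_node_iff HE i).
split; first exact: gen.
split; first exact: extremal_col HE.
split.
  rewrite rowspace_tr => x; rewrite (gen _ HT x).
  split; apply: tspan_mono => v [j [hj ->]]; exists j;
    by rewrite ?tr_row ?mxE in hj *.
split.
  rewrite rowspace_tr => x /(extremal_col HT) [j [l [hj ->]]].
  by exists j, l; rewrite mxE in hj; rewrite tr_row.
split; first exact: has_rank_A HE.
split; first by move=> i j /(same_scc_iff HE) /(crit_edge_iff HE).
split.
  by move=> i j /(same_scc_iff HE) h; exists (E j i); exact: col_shift.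
by move=> i j /(same_scc_iff HE) h; exists (E i j); exact: row_shift.
Qed.
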